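(* Let $M\geq 1$. A seller holds $M$ units of a single good; the seller values a bundle of $i$ units at $\sigma_i$ and a buyer values a bundle of $i$ units at $\beta_i$ ($i=0,\dots,M$, with $\beta_0=0$). The price per unit $p$ is fixed exogenously and both agents have utilities quasi-linear in money. Then the competitive ratio of any DSIC mechanism is (i) at most $1/M$ with general valuations, and (ii) at most $1/H_M$ with submodular valuations, where $H_M=\sum_{j=1}^M\frac1j$.
   Context: Trading $i$ units at price $p$ gives the buyer utility $b_i=\beta_i-p\,i$ and the seller utility $s_i=p\,i+\sigma_{M-i}-\sigma_M$ (so $b_0=s_0=0$ corresponds to no trade). A mechanism receives the agents' reported valuations and outputs a probability distribution $(r_0,\dots,r_M)$ over the number of units traded (at price $p$ per unit). It is DSIC if for each agent reporting the true valuation maximizes his expected utility ($\sum_i r_i b_i$ for the buyer, $\sum_i r_i s_i$ for the seller) whatever the other agent reports. The optimal gain-from-trade subject to individual rationality is $OPT=\max\{b_i+s_i: 0\leq i\leq M,\ b_i\geq 0,\ s_i\geq 0\}$; the mechanism's gain under truthful reports is $G=\sum_{i=1}^M r_i(b_i+s_i)$, and its competitive ratio is the minimum of $G/OPT$ over all admissible valuation profiles. A valuation $(v_i)_{i=0}^M$ is submodular (decreasing marginal returns) if $v_{i+1}-v_i\leq v_i-v_{i-1}$ for all $1\leq i\leq M-1$; in case (ii) both $\beta$ and $\sigma$ are submodular and admissible profiles (true and reported) are the submodular ones. *)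

(* Defs.v *)
From mathcomp Require Import all_boot all_order all_algebra.
Set Implicit Arguments. Unset Strict Implicit. Unset Printing Implicit Defensive.
Import Order.TTheory GRing.Theory Num.Theory.
Local Open Scope ring_scope.

Section Trade.
Variables (R : realFieldType) (M : nat).

Definition valuation := 'I_M.+1 -> R.

(* A mechanism maps reported (buyer, seller) valuations to a vector
   (r_0, ..., r_M) of probabilities over the number of units traded. *)
Definition mechanism := valuation -> valuation -> 'I_M.+1 -> R.

Definition is_distr (r : 'I_M.+1 -> R) : Prop :=
  (forall i, 0 <= r i) /\ \sum_(i < M.+1) r i = 1.

Definition bu (p : R) (beta : valuation) (i : 'I_M.+1) : R :=
  beta i - p * i%:R.

Definition su (p : R) (sigma : valuation) (i : 'I_M.+1) : R :=
  p * i%:R + sigma (rev_ord i) - sigma ord_max.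

Definition submodular (v : valuation) : Prop :=
  forall i : nat, (1 <= i)%N -> (i + 1 <= M)%N ->
    v (inord (i + 1)) - v (inord i) <= v (inord i) - v (inord (i - 1)).

(* Admissible valuations; [sub] = true is case (ii) (submodular). *)
Definition adm_buyer (sub : bool) (beta : valuation) : Prop :=
  beta ord0 = 0 /\ (sub -> submodular beta).
Definition adm_seller (sub : bool) (sigma : valuation) : Prop :=
  sub -> submodular sigma.

Definition exp_util (r : 'I_M.+1 -> R) (u : 'I_M.+1 -> R) : R :=
  \sum_(i < M.+1) r i * u i.

Definition DSIC (sub : bool) (p : R) (f : mechanism) : Prop :=
  (forall beta sigma, adm_buyer sub beta -> adm_seller sub sigma ->
     is_distr (f beta sigma)) /\
  (forall beta beta' sigma', adm_buyer sub beta -> adm_buyer sub beta' ->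
     adm_seller sub sigma' ->
     exp_util (f beta' sigma') (bu p beta) <= exp_util (f beta sigma') (bu p beta)) /\
  (forall sigma sigma' beta', adm_seller sub sigma -> adm_seller sub sigma' ->
     adm_buyer sub beta' ->
     exp_util (f beta' sigma') (su p sigma) <= exp_util (f beta' sigma) (su p sigma)).

Definition OPT (p : R) (beta sigma : valuation) : R :=
  \big[Num.max/0]_(i < M.+1 | (0 <= bu p beta i) && (0 <= su p sigma i))
     (bu p beta i + su p sigma i).

Definition gain (p : R) (f : mechanism) (beta sigma : valuation) : R :=
  \sum_(i < M.+1 | (0 < i)%N) f beta sigma i * (bu p beta i + su p sigma i).

(* [c] is a lower bound on G/OPT over all admissible profiles with OPT > 0;
   the competitive ratio is the largest such c. *)
Definition ratio_guarantee (sub : bool) (p : R) (f : mechanism) (c : R) : Prop :=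
  forall beta sigma, adm_buyer sub beta -> adm_seller sub sigma ->
    0 < OPT p beta sigma -> c * OPT p beta sigma <= gain p f beta sigma.

End Trade.

Definition harmonic (R : realFieldType) (M : nat) : R :=
  \sum_(j < M) (j.+1%:R)^-1.

(* Main.v *)
Require Import Defs.
From mathcomp Require Import all_boot all_order all_algebra.
From mathcomp Require Import ring lra zify.
Import Order.TTheory GRing.Theory Num.Theory.
Set Implicit Arguments. Unset Strict Implicit. Unset Printing Implicit Defensive.
Local Open Scope ring_scope.


Definition mkB (R : realFieldType) (M : nat) (p : R) (b : nat -> R) : valuation R M :=
  fun j => b (nat_of_ord j) + p * (nat_of_ord j)%:R.
Definition mkS (R : realFieldType) (M : nat) (p : R) (s : nat -> R) : valuation R M :=
  fun j => s (M - nat_of_ord j)%N - p * (M - nat_of_ord j)%N%:R.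

Lemma buE (R : realFieldType) (M : nat) (p : R) (b : nat -> R) (i : 'I_M.+1) :
  bu p (mkB p b) i = b i.
Proof. rewrite /bu /mkB; ring. Qed.

Lemma suE (R : realFieldType) (M : nat) (p : R) (s : nat -> R) (i : 'I_M.+1) :
  s 0%N = 0 -> su p (mkS p s) i = s i.
Proof.
move=> s0; rewrite /su /mkS /= subSS subnn s0 subKn; last by rewrite -ltnS.
by rewrite mulr0; ring.
Qed.

Lemma bigmax_ge (R : realFieldType) (I : eqType) (r : seq I) (P : pred I) (F : I -> R) i :
  i \in r -> P i -> F i <= \big[Num.max/0]_(j <- r | P j) F j.
Proof.
elim: r => // a r IH; rewrite inE big_cons => /orP [/eqP-> | ir] Pi.
  by rewrite Pi le_max lexx.
case: (P a); last exact: IH.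
by rewrite le_max IH ?orbT.
Qed.

Lemma OPT_ge (R : realFieldType) (M : nat) (p : R) beta sigma (i : 'I_M.+1) :
  0 <= bu p beta i -> 0 <= su p sigma i -> bu p beta i + su p sigma i <= OPT p beta sigma.
Proof.
move=> h1 h2; rewrite /OPT.
have : i \in index_enum 'I_M.+1 by rewrite mem_index_enum.
elim: (index_enum _) => // a r IH; rewrite inE big_cons => /orP [/eqP<- | ir].
  by rewrite h1 h2 /= le_max lexx.
case: ifP => _; last exact: IH.
by rewrite le_max IH ?orbT.
Qed.

Lemma gain_full (R : realFieldType) (M : nat) (p : R) (f : mechanism R M) beta sigma :
  bu p beta ord0 + su p sigma ord0 = 0 ->
  gain p f beta sigma = \sum_(i < M.+1) f beta sigma i * (bu p beta i + su p sigma i).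
Proof.
move=> h0; rewrite /gain [RHS](bigD1 ord0) //= h0 mulr0 add0r.
by apply: eq_bigl => i; rewrite lt0n.
Qed.

Lemma ratio_use (R : realFieldType) (M : nat) (p : R) (f : mechanism R M) sub c beta sigma (i : 'I_M.+1) :
  ratio_guarantee sub p f c -> adm_buyer sub beta -> adm_seller sub sigma -> 0 < c ->
  0 <= bu p beta i -> 0 <= su p sigma i -> 0 < bu p beta i + su p sigma i ->
  c * (bu p beta i + su p sigma i) <= gain p f beta sigma.
Proof.
move=> hr hb hs c0 h1 h2 h3.
have hO := OPT_ge h1 h2.
apply: le_trans (hr _ _ hb hs (lt_le_trans h3 hO)).
by rewrite ler_wpM2l // ltW.
Qed.

Lemma sum_le (R : realFieldType) (M : nat) (r g h : 'I_M.+1 -> R) :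
  (forall i, 0 <= r i) -> (forall i, g i <= h i) ->
  \sum_(i < M.+1) r i * g i <= \sum_(i < M.+1) r i * h i.
Proof. by move=> r0 gh; apply: ler_sum => i _; rewrite ler_wpM2l. Qed.

Lemma sum_le_const (R : realFieldType) (M : nat) (r g : 'I_M.+1 -> R) A :
  is_distr r -> (forall i, g i <= A) -> \sum_(i < M.+1) r i * g i <= A.
Proof.
move=> [r0 r1] gA; apply: le_trans (sum_le r0 gA) _.
by rewrite -big_distrl /= r1 mul1r.
Qed.

Lemma sum_lin (R : realFieldType) (M : nat) (r g h : 'I_M.+1 -> R) a :
  \sum_(i < M.+1) r i * (g i + a * h i) =
  \sum_(i < M.+1) r i * g i + a * \sum_(i < M.+1) r i * h i.
Proof.
rewrite big_distrr -big_split /=; apply: eq_bigr => i _; ring.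
Qed.



Definition s1 (R : realFieldType) (t : R) (k : nat) : R := if k == 0%N then 0 else t ^+ k.
Definition aa (R : realFieldType) (t : R) (m : nat) : R := 1 + (m%:R - 2) / t.
Definition WW (R : realFieldType) (t : R) (M m : nat) : R :=
  if m == 1%N then t * (t ^+ M * (M%:R - 1)) + t ^+ M else t ^+ M * (M%:R - m%:R + 1).
Definition Bi (R : realFieldType) (t : R) (M m k : nat) : R :=
  if k == 0%N then 0 else if (k < m)%N then aa t m else if k == m then 0 else - WW t M m.

Lemma pow_mono (R : realFieldType) (t : R) k n : 2 <= t -> (k <= n)%N -> t ^+ k <= t ^+ n.
Proof. by move=> t2 kn; rewrite ler_eXn2l //; lra. Qed.

Lemma pow_ge1 (R : realFieldType) (t : R) k : 2 <= t -> 1 <= t ^+ k.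
Proof. by move=> t2; apply: exprn_ege1; lra. Qed.

Lemma pow_ratio_lt (R : realFieldType) (t : R) k m : 2 <= t -> (k < m)%N ->
  t ^+ k / t ^+ m <= t^-1.
Proof.
move=> t2 km; have t0 : 0 < t by lra.
rewrite ler_pdivrMr ?exprn_gt0 //.
case: m km => // m km; rewrite exprS mulrA mulVf ?mul1r; last by rewrite gt_eqF.
by apply: pow_mono.
Qed.

Lemma pow_ratio_S (R : realFieldType) (t : R) m : 2 <= t -> t ^+ m.+1 / t ^+ m = t.
Proof.
move=> t2; have t0 : t ^+ m != 0 by rewrite expf_neq0 //; apply/eqP; lra.
by rewrite exprSr mulrC mulrA mulVf ?mul1r.
Qed.

Lemma pow_ratio_le (R : realFieldType) (t : R) k m : 2 <= t -> t ^+ k / t ^+ m <= t ^+ k.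
Proof.
move=> t2; have t0 : 0 < t by lra.
rewrite ler_pdivrMr ?exprn_gt0 //.
apply: ler_peMr; last exact: pow_ge1.
by apply: exprn_ge0; lra.
Qed.

Lemma base_dom (R : realFieldType) (t : R) (M k : nat) : 2 <= t -> (1 <= M)%N -> (k <= M)%N ->
  (Bi t M 1 k + s1 t k) / t <= Bi t M 2 k.
Proof.
move=> t2 M1 kM; have t0 : 0 < t by lra.
have tM : 0 <= t ^+ M by apply: exprn_ge0; lra.
have hM : 1 <= M%:R :> R by rewrite ler1n.
rewrite /Bi /s1 /WW /aa /=.
case: k kM => [|k] kM /=; first by rewrite addr0 mul0r.
case: k kM => [|k] kM /=.
  by rewrite add0r expr1 mulfV ?gt_eqF // subrr mul0r addr0.
rewrite ler_pdivrMr //.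
have hk : t ^+ k.+2 <= t ^+ M by apply: pow_mono.
have M2 : 2%:R <= M%:R :> R by rewrite ler_nat (leq_trans _ kM).
have h0 : 0 <= t * (t ^+ M * (M%:R - 1)).
  by apply: mulr_ge0; [lra| apply: mulr_ge0; lra].
case: k kM hk => [|k] kM hk /=.
  rewrite mul0r; lra.
lra.
Qed.

Lemma step_dom (R : realFieldType) (t : R) (M m k : nat) : 2 <= t -> (2 <= m)%N -> (k <= M)%N ->
  Bi t M m k + s1 t k / t ^+ m <= Bi t M m.+1 k.
Proof.
move=> t2 m2 kM; have t0 : 0 < t by lra.
have tM : 1 <= t ^+ M by apply: pow_ge1.
have hm : 2%:R <= m%:R :> R by rewrite ler_nat.
rewrite /Bi /s1 /WW /aa.
have m1 : (m == 1%N) = false by case: m m2 {hm} => [|[|]].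
have m1' : (m.+1 == 1%N) = false by case: m m2 {hm m1} => [|[|]].
rewrite m1 m1'.
case: k kM => [|k] kM /=; first by rewrite mul0r addr0.
case: (ltngtP k.+1 m) => hk.
- rewrite ltnS (ltnW hk).
  have := pow_ratio_lt t2 hk.
  have -> : (m.+1%:R - 2) / t = (m%:R - 2) / t + t^-1 :> R by rewrite -natr1; field; apply/eqP; lra.
  lra.
- case: (ltngtP k.+1 m.+1) => hk2.
  + by move: hk hk2; rewrite !ltnS => a b; move: (leq_ltn_trans a b); rewrite ltnn.
  + have hr := pow_ratio_le k.+1 m t2.
    have hk' := pow_mono t2 kM.
    rewrite -natr1.
    have e : t ^+ M * (M%:R - m%:R + 1) - t ^+ M * (M%:R - (m%:R + 1) + 1) = t ^+ M by ring.
    lra.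
  + have e : k = m by case: hk2.
    subst k; rewrite pow_ratio_S //.
    have hmM : m.+1%:R <= M%:R :> R by rewrite ler_nat.
    rewrite -natr1 in hmM.
    have : t <= t ^+ M * (M%:R - m%:R + 1).
      have : t ^+ M * 2 <= t ^+ M * (M%:R - m%:R + 1) by apply: ler_wpM2l; lra.
      have : t <= t ^+ M.
        have := pow_mono (k:=1) t2 (leq_trans (isT : (1 <= m.+1)%N) kM). by rewrite expr1.
      lra.
    lra.
- subst m; rewrite ltnSn.
  rewrite mulfV ?expf_neq0 //; last by apply/eqP; lra.
  have : 0 <= (k.+1%:R - 1) / t by apply: divr_ge0; [rewrite subr_ge0 ler1n | lra].
  have -> : (k.+2%:R - 2) = k.+1%:R - 1 :> R by rewrite -[k.+2]addn1 natrD; ring.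
  lra.
Qed.

Lemma expB (R : realFieldType) (M : nat) (p : R) (r : 'I_M.+1 -> R) (b : nat -> R) :
  exp_util r (bu p (mkB p b)) = \sum_(i < M.+1) r i * b i.
Proof. by apply: eq_bigr => i _; rewrite buE. Qed.

Lemma expS (R : realFieldType) (M : nat) (p : R) (r : 'I_M.+1 -> R) (s : nat -> R) :
  s 0%N = 0 -> exp_util r (su p (mkS p s)) = \sum_(i < M.+1) r i * s i.
Proof. by move=> s0; apply: eq_bigr => i _; rewrite suE. Qed.

Lemma gainE (R : realFieldType) (M : nat) (p : R) (f : mechanism R M) (b s : nat -> R) :
  b 0%N = 0 -> s 0%N = 0 ->
  gain p f (mkB p b) (mkS p s) = \sum_(i < M.+1) f (mkB p b) (mkS p s) i * (b i + s i).
Proof.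
move=> b0 s0; rewrite gain_full; last by rewrite buE suE // b0 s0 addr0.
by apply: eq_bigr => i _; rewrite buE suE.
Qed.

Lemma admB (R : realFieldType) (M : nat) (p : R) (b : nat -> R) :
  b 0%N = 0 -> adm_buyer false (mkB (M:=M) p b).
Proof. by move=> b0; split => //; rewrite /mkB /= b0 mulr0 addr0. Qed.

Definition sl (R : realFieldType) (t : R) (M m k : nat) : R :=
  if k == m then t ^+ m else - Bi t M m k.

Lemma case_i (R : realFieldType) (M : nat) (p : R) (f : mechanism R M) (c t : R) :
  (1 <= M)%N -> DSIC false p f -> ratio_guarantee false p f c -> 0 < c -> 2 <= t ->
  M%:R * c <= aa t M.+1.
Proof.
move=> M1 [Ddist [Dbuy Dsel]] Hr c0 t2.
have t0 : 0 < t by lra.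
pose S : valuation R M := mkS p (s1 t).
pose B m : valuation R M := mkB p (Bi t M m).
have s10 : s1 t 0 = 0 by [].
have Bi0 : forall m, Bi t M m 0 = 0 by [].
have aB : forall m, adm_buyer false (B m) by move=> m; apply: admB.
have aS : forall s : valuation R M, adm_seller false s by [] .
have s1ge : forall k, 0 <= s1 t k.
  by move=> [|k] //=; apply: exprn_ge0; lra.
have claim : forall j, (j < M)%N -> j.+1%:R * c <= \sum_(i < M.+1) f (B j.+1) S i * Bi t M j.+2 i.
  elim => [|j IH] hj.
  - have h1 : (1 < M.+1)%N by [].
    have hr := ratio_use (i := inord 1) Hr (aB 1%N) (aS S) c0.
    rewrite /B /S !buE !suE // inordK // in hr.
    have e1 : Bi t M 1 1 = 0 by [].
    rewrite e1 /s1 /= expr1 add0r in hr.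
    have := hr (lexx 0) (ltW t0) t0.
    rewrite gainE // => hg.
    have hd : forall i : 'I_M.+1, (Bi t M 1 i + s1 t i) / t <= Bi t M 2 i.
      by move=> i; apply: base_dom => //; rewrite -ltnS.
    have := sum_le (r := f (B 1%N) S) (fun i => (Ddist _ _ (aB _) (aS _)).1 i) hd.
    rewrite /B /S.
    have -> : \sum_(i < M.+1) f (mkB p (Bi t M 1)) (mkS p (s1 t)) i * ((Bi t M 1 i + s1 t i) / t)
      = (\sum_(i < M.+1) f (mkB p (Bi t M 1)) (mkS p (s1 t)) i * (Bi t M 1 i + s1 t i)) / t.
      by rewrite big_distrl; apply: eq_bigr => i _; rewrite mulrA.
    move=> h2; apply: le_trans h2; rewrite mul1r ler_pdivlMr //; lra.
  - set m := j.+2.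
    have IH' := IH (ltnW hj).
    have hb := Dbuy (B m) (B j.+1) S (aB _) (aB _) (aS _).
    rewrite /B /S !expB in hb.
    pose S' : valuation R M := mkS p (sl t M m).
    have sl0 : sl t M m 0 = 0 by rewrite /sl /= oppr0.
    have hs := Dsel S S' (B m) (aS _) (aS _) (aB _).
    rewrite /B /S /S' !expS // in hs.
    have hmM : (m < M.+1)%N by rewrite ltnS.
    have hr := ratio_use (i := inord m) Hr (aB m) (aS S') c0.
    rewrite /B /S' !buE !suE // inordK // in hr.
    have e1 : Bi t M m m = 0 by rewrite /Bi /= ltnn eqxx.
    have e2 : sl t M m m = t ^+ m by rewrite /sl eqxx.
    rewrite e1 e2 add0r in hr.
    have tm0 : 0 < t ^+ m by apply: exprn_gt0.
    have := hr (lexx 0) (ltW tm0) tm0.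
    rewrite gainE // => hg.
    have hd1 : forall i : 'I_M.+1, Bi t M m i + sl t M m i <= s1 t i.
      move=> i; rewrite /sl; case: eqP => [-> | _].
        by rewrite e1 add0r /s1.
      by rewrite subrr.
    have h3 := le_trans hg (sum_le (fun i => (Ddist _ _ (aB _) (aS _)).1 i) hd1).
    have hd2 : forall i : 'I_M.+1, Bi t M m i + (t ^+ m)^-1 * s1 t i <= Bi t M m.+1 i.
      by move=> i; rewrite mulrC; apply: step_dom => //; rewrite -ltnS.
    have h4 := sum_le (fun i => (Ddist (B m) S (aB _) (aS _)).1 i) hd2.
    rewrite sum_lin in h4.
    apply: le_trans h4.
    have h5 : c <= (t ^+ m)^-1 * \sum_(i < M.+1) f (mkB p (Bi t M m)) (mkS p (s1 t)) i * s1 t i.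
      by rewrite mulrC ler_pdivlMr //; apply: le_trans h3 hs.
    rewrite -[m%:R]natr1; lra.
have hM : (M.-1 < M)%N by rewrite prednK.
have := claim _ hM; rewrite prednK //.
move=> h; apply: le_trans h _.
apply: sum_le_const; first exact: Ddist.
move=> i; rewrite /Bi /aa; case: eqP => _.
  have hM1 : 1 <= M%:R :> R by rewrite ler1n.
  have : 0 <= (M.+1%:R - 2) / t.
    apply: divr_ge0; last lra.
    rewrite -natr1; lra.
  lra.
by rewrite ltn_ord.
Qed.


Lemma final_i (R : realFieldType) (M : nat) (c : R) : (1 <= M)%N ->
  (forall t : R, 2 <= t -> M%:R * c <= aa t M.+1) -> c <= (M%:R)^-1.
Proof.
move=> M1 h.
have hM : 1 <= M%:R :> R by rewrite ler1n.
rewrite -div1r ler_pdivlMr; last lra.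
case: (lerP (c * M%:R) 1) => // hc.
pose d := c * M%:R - 1.
have d0 : 0 < d by rewrite /d; lra.
pose t := M%:R / d + 2.
have ht : 2 <= t.
  have : 0 <= M%:R / d by apply: divr_ge0; lra.
  rewrite /t; lra.
have := h t ht; rewrite /aa -natr1.
have t0 : 0 < t by lra.
have e : (M%:R + 1 - 2) / t = (M%:R - 1) / t by congr (_ / _); ring.
rewrite e => h2.
have h3 : (c * M%:R - 1) * t <= M%:R - 1.
  have : (M%:R * c - 1) * t <= (M%:R - 1) / t * t by apply: ler_wpM2r; lra.
  by rewrite divfK ?gt_eqF // (mulrC M%:R c).
have h4 : d * t = M%:R + 2 * d by rewrite /t mulrDr mulrCA mulfV ?gt_eqF // mulr1; ring.
rewrite -/d in h3; lra.
Qed.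

Definition m3 (R : realFieldType) (a b c : R) : R :=
  if a <= b then (if a <= c then a else c) else (if b <= c then b else c).

Ltac m3t := rewrite /m3; repeat case: ifPn; rewrite -?ltNge => *; lra.

Lemma m3_le1 (R : realFieldType) (a b c : R) : m3 a b c <= a.
Proof. m3t. Qed.
Lemma m3_le2 (R : realFieldType) (a b c : R) : m3 a b c <= b.
Proof. m3t. Qed.
Lemma m3_le3 (R : realFieldType) (a b c : R) : m3 a b c <= c.
Proof. m3t. Qed.
Lemma m3_ge (R : realFieldType) (a b c y : R) : y <= a -> y <= b -> y <= c -> y <= m3 a b c.
Proof. move=> ha hb hc; m3t. Qed.
Lemma m3_cases (R : realFieldType) (a b c : R) : m3 a b c = a \/ m3 a b c = b \/ m3 a b c = c.
Proof. rewrite /m3; repeat case: ifP => _; by auto. Qed.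

Lemma m3_concave (R : realFieldType) (g1 g2 g3 : R -> R) (z : R) :
  (forall g, g = g1 \/ g = g2 \/ g = g3 -> g (z + 1) + g (z - 1) = 2 * g z) ->
  m3 (g1 (z + 1)) (g2 (z + 1)) (g3 (z + 1)) + m3 (g1 (z - 1)) (g2 (z - 1)) (g3 (z - 1))
  <= 2 * m3 (g1 z) (g2 z) (g3 z).
Proof.
move=> hg.
have a1 := m3_le1 (g1 (z + 1)) (g2 (z + 1)) (g3 (z + 1)).
have a2 := m3_le2 (g1 (z + 1)) (g2 (z + 1)) (g3 (z + 1)).
have a3 := m3_le3 (g1 (z + 1)) (g2 (z + 1)) (g3 (z + 1)).
have b1 := m3_le1 (g1 (z - 1)) (g2 (z - 1)) (g3 (z - 1)).
have b2 := m3_le2 (g1 (z - 1)) (g2 (z - 1)) (g3 (z - 1)).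
have b3 := m3_le3 (g1 (z - 1)) (g2 (z - 1)) (g3 (z - 1)).
have e1 := hg g1 (or_introl erefl).
have e2 := hg g2 (or_intror (or_introl erefl)).
have e3 := hg g3 (or_intror (or_intror erefl)).
case: (m3_cases (g1 z) (g2 z) (g3 z)) => [->|[->|->]]; lra.
Qed.

Definition Kc (R : realFieldType) (M n : nat) : R := if n == 1%N then 3 * M%:R else M%:R.
Definition bbr (R : realFieldType) (M n : nat) (z : R) : R :=
  m3 ((1 - (n%:R)^-1) * z) (1 - z / n%:R) (- Kc R M n * (z - n%:R)).
Definition bb (R : realFieldType) (M n k : nat) : R := bbr M n (k%:R).

Lemma Kc_ge (R : realFieldType) M n : 0 <= Kc R M n.
Proof. rewrite /Kc; case: ifP => _; last by rewrite ler0n. by rewrite mulr_ge0 ?ler0n. Qed.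

Lemma bb0 (R : realFieldType) M n : (1 <= n)%N -> bb R M n 0 = 0.
Proof.
move=> n1; have hn : 1 <= n%:R :> R by rewrite ler1n.
apply/eqP; rewrite eq_le; apply/andP; split.
  by apply: le_trans (m3_le1 _ _ _) _; rewrite mulr0.
have hK := Kc_ge R M n.
have h : 0 <= Kc R M n * n%:R by rewrite mulr_ge0 // ?ler0n.
apply: m3_ge; [by rewrite mulr0 | by rewrite mul0r subr0 ler01 | lra].
Qed.

Lemma bbn (R : realFieldType) M n : (1 <= n)%N -> bb R M n n = 0.
Proof.
move=> n1; have hn : 1 <= n%:R :> R by rewrite ler1n.
apply/eqP; rewrite eq_le; apply/andP; split.
  by apply: le_trans (m3_le2 _ _ _) _; rewrite mulfV ?subrr // gt_eqF //; lra.
apply: m3_ge.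
- by rewrite mulrBl mul1r mulVf ?subr_ge0 // gt_eqF //; lra.
- by rewrite mulfV ?subrr // gt_eqF //; lra.
- by rewrite subrr mulr0.
Qed.

Lemma bb_le1 (R : realFieldType) M n k : (1 <= n)%N -> bb R M n k <= 1.
Proof.
move=> n1; apply: le_trans (m3_le2 _ _ _) _.
have : 0 <= k%:R / n%:R :> R by rewrite divr_ge0 ?ler0n.
lra.
Qed.

Lemma dom_base (R : realFieldType) M k : (1 <= M)%N -> (k <= M)%N ->
  (bb R M 1 k + k%:R) / 2 <= bb R M 2 k.
Proof.
move=> M1 kM; have hM : 1 <= M%:R :> R by rewrite ler1n.
have z0 : 0 <= k%:R :> R by rewrite ler0n.
rewrite /bb /bbr /Kc /=.
set z := k%:R; set b := m3 _ _ _.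
have h1 : b <= 0 by apply: le_trans (m3_le1 _ _ _) _; rewrite invr1 subrr mul0r.
have h3 : b <= - (3 * M%:R) * (z - 1) by apply: m3_le3.
have e2 : (2%:R : R) = 2 by [].
apply: m3_ge.
- rewrite ler_pdivrMr; last lra.
  have : (1 - 2^-1) * z * 2 = z :> R by field.
  lra.
- rewrite ler_pdivrMr; last lra.
  have e : (1 - z / 2) * 2 = 2 - z :> R by field.
  rewrite e; case: (lerP z 1) => hz; first lra.
  have : 0 <= (3 * M%:R - 2) * (z - 1) by apply: mulr_ge0; lra.
  lra.
- rewrite ler_pdivrMr; last lra.
  have : 0 <= (M%:R - 1) * z by apply: mulr_ge0; lra.
  lra.
Qed.

Lemma dom_step (R : realFieldType) M n k : (2 <= n)%N -> (k <= M)%N ->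
  bb R M n k + (n%:R * n.+1%:R)^-1 * k%:R <= bb R M n.+1 k.
Proof.
move=> n2 kM.
have hN : 2 <= n%:R :> R by rewrite ler_nat.
have z0 : 0 <= k%:R :> R by rewrite ler0n.
have zM : k%:R <= M%:R :> R by rewrite ler_nat.
rewrite /bb /bbr /Kc.
have -> : (n == 1%N) = false by case: n n2 {hN} => [|[|]].
have -> : (n.+1 == 1%N) = false by case: n n2 {hN} => [|[|]].
rewrite -natr1.
set z := k%:R; set N := n%:R; set b := m3 _ _ _.
have N0 : N != 0 by apply/eqP; lra.
have N1 : N + 1 != 0 by apply/eqP; lra.
have a1 : b <= (1 - N^-1) * z by apply: m3_le1.
have a2 : b <= 1 - z / N by apply: m3_le2.
have a3 : b <= - M%:R * (z - N) by apply: m3_le3.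
apply: m3_ge.
- have : (1 - N^-1) * z + (N * (N + 1))^-1 * z = (1 - (N + 1)^-1) * z.
    by field; apply/andP; split; [exact: N1 | exact: N0].
  lra.
- have : 1 - z / N + (N * (N + 1))^-1 * z = 1 - z / (N + 1).
    by field; apply/andP; split; [exact: N1 | exact: N0].
  lra.
- have hq : (N * (N + 1))^-1 * z <= z.
    rewrite mulrC ler_pdivrMr; last by apply: mulr_gt0; lra.
    have : 1 <= N * (N + 1) by nra.
    nra.
  lra.
Qed.

Lemma submodB (R : realFieldType) (M : nat) (p : R) n : submodular (mkB (M:=M) p (bb R M n)).
Proof.
move=> [|i] // _ hi; rewrite addn1 in hi; rewrite /mkB !inordK ?subn1 ?addn1 //=; [|lia|lia].

have e1 : i.+2%:R = i.+1%:R + 1 :> R by rewrite -natr1.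
have e2 : i%:R = i.+1%:R - 1 :> R by rewrite -natr1; ring.
rewrite /bb e1 e2.
set z := i.+1%:R.
have := @m3_concave R (fun z => (1 - (n%:R)^-1) * z) (fun z => 1 - z / n%:R)
   (fun z => - Kc R M n * (z - n%:R)) z.
rewrite /bbr /=.
move=> h; have := h _; clear h.
move=> h; suff H : forall g, g = (fun z => (1 - (n%:R)^-1) * z) \/ g = (fun z => 1 - z / n%:R) \/
   g = (fun z => - Kc R M n * (z - n%:R)) -> g (z + 1) + g (z - 1) = 2 * g z.
  have := h H; lra.
by move=> g [->|[->|->]] /=; ring.
Qed.

Definition lin (R : realFieldType) (x : R) (k : nat) : R := x * k%:R.

Lemma submodS (R : realFieldType) (M : nat) (p x : R) : submodular (mkS (M:=M) p (lin x)).
Proof.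
move=> [|i] // _ hi; rewrite addn1 in hi; rewrite /mkS /lin !inordK ?subn1 ?addn1 //=; [|lia|lia].
rewrite !natrB; [|lia|lia|lia].
rewrite -!natr1; lra.
Qed.

Lemma harmS (R : realFieldType) n : harmonic R n.+1 = harmonic R n + (n.+1%:R)^-1.
Proof. by rewrite /harmonic big_ord_recr. Qed.

Lemma harm1 (R : realFieldType) : harmonic R 1 = 1.
Proof. by rewrite harmS /harmonic big_ord0 add0r invr1. Qed.

Lemma case_ii (R : realFieldType) (M : nat) (p : R) (f : mechanism R M) (c x : R) :
  (2 <= M)%N -> DSIC true p f -> ratio_guarantee true p f c -> 0 < c -> 1 <= x ->
  c * harmonic R M <= 1 + M%:R / x.
Proof.
move=> M2 [Ddist [Dbuy Dsel]] Hr c0 x1.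
have x0 : 0 < x by lra.
pose S : valuation R M := mkS p (lin 1).
pose S' : valuation R M := mkS p (lin x).
pose B n : valuation R M := mkB p (bb R M n).
have lin0 : forall y : R, lin y 0 = 0 by move=> y; rewrite /lin mulr0n mulr0.
have aB : forall n, (1 <= n)%N -> adm_buyer true (B n).
  move=> n n1; split; last by move=> _; apply: submodB.
  by rewrite /B /mkB /= bb0 // mulr0 addr0.
have aS : forall y, adm_seller true (mkS (M:=M) p (lin y)) by move=> y _; apply: submodS.
have dist : forall n y, (1 <= n)%N -> is_distr (f (B n) (mkS p (lin y))).
  by move=> n y n1; apply: Ddist; [apply: aB | apply: aS].
have slie : forall m, (1 <= m)%N -> (m <= M)%N ->
    c * m%:R - x^-1 <= \sum_(i < M.+1) f (B m) S i * i%:R.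
  move=> m m1 mM.
  have hs := Dsel S S' (B m) (aS _) (aS _) (aB _ m1).
  rewrite /S /S' !expS // in hs.
  have hmM : (m < M.+1)%N by rewrite ltnS.
  have hr := ratio_use (i := inord m) Hr (aB _ m1) (aS x) c0.
  rewrite /B !buE !suE // inordK // bbn // add0r /lin in hr.
  have hm0 : 0 < x * m%:R by apply: mulr_gt0; rewrite // ltr0n.
  have := hr (lexx 0) (ltW hm0) hm0.
  rewrite gainE ?bb0 ?mulr0n ?mulr0 // => hg.
  have hd : forall i : 'I_M.+1, bb R M m i + lin x i <= 1 + x * i%:R.
    by move=> i; rewrite /lin; have := bb_le1 R M i m1; lra.
  have h2 := le_trans hg (sum_le (dist m x m1).1 hd).
  rewrite (sum_lin _ (fun _ => 1) (fun i : 'I_M.+1 => (i : nat)%:R)) in h2; cbv beta in h2.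
  have e1 : \sum_(i < M.+1) f (mkB p (bb R M m)) (mkS p (lin x)) i * 1 = 1.
    by rewrite -[RHS](dist m x m1).2; apply: eq_bigr => i _; rewrite mulr1.
  rewrite e1 in h2.
  have e2 : forall r : 'I_M.+1 -> R, \sum_(i < M.+1) r i * lin 1 i = \sum_(i < M.+1) r i * i%:R.
    by move=> r; apply: eq_bigr => i _; rewrite /lin mul1r.
  rewrite !e2 in hs.
  set Y := \sum_(i < M.+1) _ * _ in h2 hs.
  have h3 : (c * m%:R - Y) * x <= 1 by nra.
  have h4 : c * m%:R - Y <= 1 / x by rewrite ler_pdivlMr.
  rewrite /B /S; rewrite div1r in h4; lra.
have claim : forall j, (j.+1 < M)%N ->
    c * (harmonic R j.+2 - 1) - j%:R / x <= \sum_(i < M.+1) f (B j.+1) S i * bb R M j.+2 i.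
  elim => [|j IH] hj.
  - have h1 : (1 < M.+1)%N by rewrite ltnS ltnW.
    have hr := ratio_use (i := inord 1) Hr (aB _ (leqnn 1)) (aS 1) c0.
    rewrite /B /S !buE !suE // inordK // bbn // add0r /lin mulr1 in hr.
    have := hr (lexx 0) ler01 ltr01.
    rewrite gainE ?bb0 ?mulr0n ?mulr0 // => hg.
    have hd : forall i : 'I_M.+1, (bb R M 1 i + lin 1 i) / 2 <= bb R M 2 i.
      by move=> i; rewrite /lin mul1r; apply: dom_base; [lia | rewrite -ltnS].
    have := sum_le (dist 1%N 1 (leqnn 1)).1 hd.
    have -> : \sum_(i < M.+1) f (B 1%N) (mkS p (lin 1)) i * ((bb R M 1 i + lin 1 i) / 2)
      = (\sum_(i < M.+1) f (B 1%N) (mkS p (lin 1)) i * (bb R M 1 i + lin 1 i)) / 2.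
      by rewrite big_distrl; apply: eq_bigr => i _; rewrite mulrA.
    rewrite /B /S => h2; apply: le_trans h2.
    rewrite harmS harm1 mul0r subr0 ler_pdivlMr; last lra.
    have -> : 1 + 2%:R^-1 - 1 = 2^-1 :> R by ring.
    have -> : c * 2^-1 * 2 = c :> R by field.
    by rewrite mulr1 in hg.
  - set m := j.+2.
    have IH' := IH (ltnW hj).
    have hb := Dbuy (B m) (B j.+1) S (aB m isT) (aB j.+1 isT) (aS _).
    rewrite /B /S !expB in hb.
    have hs := slie m isT (ltnW hj).
    have hd : forall i : 'I_M.+1,
        bb R M m i + (m%:R * m.+1%:R)^-1 * i%:R <= bb R M m.+1 i.
      by move=> i; apply: dom_step => //; rewrite -ltnS.
    have h4 := sum_le (dist m 1 (isT : (0 < m)%N)).1 hd.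
    rewrite sum_lin in h4.
    apply: le_trans h4.
    rewrite harmS.
    have hm : 2 <= m%:R :> R by rewrite ler_nat.
    set Y := \sum_(i < M.+1) _ * i%:R in hs *.
    rewrite /B /S in hb IH' hs *.
    have ea : (m%:R * m.+1%:R)^-1 * (c * m%:R) = c * (m.+1%:R)^-1 :> R.
      by rewrite -natr1; field; apply/andP; split; apply/eqP; lra.
    have eb : 0 <= (m%:R * m.+1%:R)^-1 * x^-1 <= x^-1.
      have hq : 0 < (m%:R * m.+1%:R)^-1 :> R by rewrite invr_gt0 mulr_gt0 ?ltr0n.
      have hq1 : (m%:R * m.+1%:R)^-1 <= 1 :> R.
        rewrite invr_le1 ?mulr_gt0 ?ltr0n ?unitfE //; last by rewrite mulf_neq0 // pnatr_eq0.
        rewrite -natrM ler1n muln_gt0 //.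
      have hx : 0 <= x^-1 by rewrite invr_ge0 ltW.
      apply/andP; split; first by rewrite mulr_ge0 // ltW.
      by rewrite ler_piMl.
    have ec : (m%:R * m.+1%:R)^-1 * (c * m%:R - x^-1) <= (m%:R * m.+1%:R)^-1 * Y.
      by rewrite ler_wpM2l // invr_ge0 mulr_ge0 ?ler0n.
    rewrite mulrBr ea in ec.
    have ed : j.+1%:R / x = j%:R / x + x^-1 :> R by rewrite -natr1 mulrDl mul1r.
    rewrite ed.
    move: eb => /andP [eb1 eb2]. subst m.
    set V := \sum_(i < M.+1) f (mkB p (bb R M j.+1)) (mkS p (lin 1)) i * bb R M j.+2 i in hb IH'.
    set W := \sum_(i < M.+1) f (mkB p (bb R M j.+2)) (mkS p (lin 1)) i * bb R M j.+2 i in hb *.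
    set q := (j.+2%:R * j.+3%:R)^-1 in eb1 eb2 ec *. set u := x^-1 in ed eb1 eb2 ec *. set h := harmonic R j.+2 in IH' *. set w := j.+3%:R^-1 in ec *.
    rewrite -/u in ec eb1 eb2 IH' *. lra.
have hM : (M.-2.+1 < M)%N by lia.
have hc := claim _ hM.
have eM : M.-2.+2 = M by lia.
rewrite eM in hc.
have M0 : (0 < M)%N by lia.
have hb := Dbuy (B M) (B M.-2.+1) S (aB M M0) (aB M.-2.+1 isT) (aS _).
rewrite /B /S !expB in hb.
have hs := slie M M0 (leqnn M).
have hMr : 2 <= M%:R :> R by rewrite ler_nat.
have hd : forall i : 'I_M.+1, bb R M M i + (M%:R)^-1 * i%:R <= 1.
  move=> i; have := m3_le2 ((1 - (M%:R)^-1) * i%:R) (1 - i%:R / M%:R)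
     (- Kc R M M * (i%:R - M%:R)).
  by rewrite /bb /bbr mulrC; lra.
have hf := sum_le_const (dist M 1 M0) hd.
rewrite sum_lin in hf.
set Y := \sum_(i < M.+1) _ * i%:R in hs hf.
set W := \sum_(i < M.+1) _ * bb R M M i in hb hf.
rewrite /B /S -/W in hc hb.
have ea : (M%:R)^-1 * (c * M%:R - x^-1) <= (M%:R)^-1 * Y by rewrite ler_wpM2l // invr_ge0 ler0n.
have eb : (M%:R)^-1 * (c * M%:R) = c by field; apply/eqP; lra.
have ec : 0 <= (M%:R)^-1 * x^-1 <= x^-1.
  have hx : 0 <= x^-1 by rewrite invr_ge0 ltW.
  have hMi : 0 <= (M%:R)^-1 :> R by rewrite invr_ge0 ler0n.
  apply/andP; split; first by rewrite mulr_ge0.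
  rewrite ler_piMl //.
  rewrite invr_le1 ?unitfE ?pnatr_eq0 ?ltr0n ?ler1n; lia.
rewrite mulrBr eb in ea.
move: ec => /andP [ec1 ec2].
have hj : M.-2%:R / x + x^-1 <= M%:R / x.
  have e : M.-2%:R / x + x^-1 = (M.-2%:R + 1) / x by rewrite mulrDl mul1r.
  rewrite e ler_pdivlMr // divfK ?gt_eqF // natr1 ler_nat.
  lia.
rewrite -[harmonic R M](subrK 1).
lra.
Qed.


Lemma final_gen (R : realFieldType) (a K : R) : 0 <= K ->
  (forall x : R, 1 <= x -> a <= 1 + K / x) -> a <= 1.
Proof.
move=> K0 h; case: (lerP a 1) => // ha.
pose x := K / (a - 1) + 1.
have hx1 : 1 <= x.
  have : 0 <= K / (a - 1) by apply: divr_ge0; lra.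
  rewrite /x; lra.
have := h x hx1.
have x0 : 0 < x by lra.
have e : K / x * x = K by rewrite divfK ?gt_eqF.
have e2 : (a - 1) * x = K + (a - 1).
  rewrite /x mulrDr mulr1 mulrCA mulfV ?mulr1 //; apply/eqP; lra.
move=> h2.
have : (a - 1) * x <= K / x * x by rewrite ler_wpM2r; lra.
rewrite e e2; lra.
Qed.

Lemma case_ii1 (R : realFieldType) (M : nat) (p : R) (f : mechanism R M) (c : R) :
  M = 1%N -> DSIC true p f -> ratio_guarantee true p f c -> 0 < c -> c <= 1.
Proof.
move=> eM [Ddist _] Hr c0.
pose S : valuation R M := mkS p (lin 1).
pose B : valuation R M := mkB p (bb R M 1).
have aB : adm_buyer true B.
  split; last by move=> _; apply: submodB.
  by rewrite /B /mkB /= bb0 // mulr0 addr0.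
have aS : adm_seller true S by move=> _; apply: submodS.
have h1 : (1 < M.+1)%N by rewrite eM.
have hr := ratio_use (i := inord 1) Hr aB aS c0.
have sE : forall i, su p S i = lin 1 i by move=> i; rewrite suE // /lin mulr0n mulr0.
rewrite /B !buE -/S !sE inordK // bbn // add0r /lin mulr1 in hr.
have := hr (lexx 0) ler01 ltr01.
rewrite gainE ?bb0 // => [hg|]; last by rewrite /lin mulr0n mulr0.
rewrite mulr1 in hg; apply: le_trans hg _; apply: sum_le_const; first exact: Ddist.
move=> i; have := m3_le2 ((1 - (1%:R)^-1) * i%:R) (1 - i%:R / 1%:R)
     (- Kc R M 1 * (i%:R - 1%:R)).
by rewrite /bb /bbr /lin; lra.
Qed.

Lemma harm_gt0 (R : realFieldType) M : (1 <= M)%N -> 0 < harmonic R M.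
Proof.
case: M => // M _; rewrite harmS.
have : 0 <= harmonic R M by apply: sumr_ge0 => i _; rewrite invr_ge0 ler0n.
have : 0 < (M.+1%:R)^-1 :> R by rewrite invr_gt0 ltr0n.
by move=> h1 h2; apply: ltr_wpDl.
Qed.

Theorem corollary1 (R : realFieldType) (M : nat) (p : R) (f : mechanism R M) :
  (1 <= M)%N ->
  (DSIC false p f -> forall c : R, ratio_guarantee false p f c -> c <= (M%:R)^-1) /\
  (DSIC true p f -> forall c : R, ratio_guarantee true p f c -> c <= (harmonic R M)^-1).
Proof.
move=> M1; split.
- move=> D c H; case: (lerP c 0) => hc.
    by apply: le_trans hc _; rewrite invr_ge0 ler0n.
  apply: final_i => // t t2; exact: (case_i M1 D H hc t2).
- move=> D c H.
  have Hp := harm_gt0 R M1.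
  case: (lerP c 0) => hc.
    by apply: le_trans hc _; rewrite invr_ge0 ltW.
  rewrite -div1r ler_pdivlMr //.
  case: (leqP M 1) => hM.
    have eM : M = 1%N by lia.
    have := case_ii1 eM D H hc.
    by rewrite eM harm1 mulr1.
  apply: (@final_gen R _ M%:R); first exact: ler0n.
  move=> x x1; exact: (case_ii hM D H hc x1).
Qed.
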